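(* Under Assumptions (A1), (A2) and (A4) of the context, for every $\zeta>0$ there exist $M\in\mathbb N_+$ and $\lambda>0$ such that $$\|z\|_{\mathrm D(A)}^2+2\lambda\|\mathfrak d(z)\|^2_{\mathbb R^{M_\sigma}}\ge\zeta\|z\|_V^2\qquad\text{for all }z\in\mathrm D(A).$$ Moreover $M$ can be chosen depending only on $\zeta$ (nondecreasingly), and $\lambda$ depending only on $\zeta$ and $\varpi_M$ (nondecreasingly), where $\varpi_M>0$ is a constant such that $\|\Psi^\diamond v\|^2_{\mathrm D(A)}\le\varpi_M\|\Psi^\diamond v\|_V^2$ and $\|\Psi^\diamond v\|_V^2\le\varpi_M\|v\|^2_{\mathbb R^{M_\sigma}}$ for all $v\in\mathbb R^{M_\sigma}$.
   Context: $H$ real Hilbert space identified with its dual, $V\subseteq H$ real Hilbert space. (A1) $A\in\mathcal L(V,V')$ symmetric with $(y,z)\mapsto\langle Ay,z\rangle_{V',V}$ a complete scalar product on $V$; $V$ carries the scalar product $(y,z)_V:=\langle Ay,z\rangle_{V',V}$. (A2) $V\subseteq H$ is dense, continuous, compact. $\mathrm D(A):=\{h\in H\mid Ah\in H\}$ with norm $\|z\|_{\mathrm D(A)}:=\|Az\|_H$; $\mathrm D(A)'$ its dual, pairing $\langle\cdot,\cdot\rangle$. (A4) $\sigma:\mathbb N_+\to\mathbb N_+$ strictly increasing, $M_\sigma:=\sigma(M)$; for each $M$, linearly independent actuators $\mathfrak d^{M,j}\in\mathrm D(A)'$, $1\le j\le M_\sigma$, and linearly independent $\Psi^{M,j}\in\mathrm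 D(A)$, $1\le j\le M_\sigma$, with $\langle\mathfrak d^{M,j},\Psi^{M,i}\rangle=\delta_{ij}$; with $\mathrm D_M:=\{z\in\mathrm D(A)\mid\langle\mathfrak d^{M,j},z\rangle=0\ \forall j\}$, the constant $\xi_{M_+}:=\inf_{\Theta\in\mathrm D_M\setminus\{0\}}\|\Theta\|^2_{\mathrm D(A)}/\|\Theta\|_V^2$ satisfies $\xi_{M_+}\to+\infty$ as $M\to\infty$. Notation: $\mathfrak d(z):=(\langle\mathfrak d^{M,1},z\rangle,\dots,\langle\mathfrak d^{M,M_\sigma},z\rangle)\in\mathbb R^{M_\sigma}$ for $z\in\mathrm D(A)$, and $\Psi^\diamond v:=\sum_{j=1}^{M_\sigma}v_j\Psi^{M,j}$ for $v\in\mathbb R^{M_\sigma}$. *)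

(* Defs.v *)
From HB Require Import structures.
From mathcomp Require Import all_boot all_order all_algebra.
From mathcomp Require Import all_classical all_reals all_analysis.
Set Implicit Arguments. Unset Strict Implicit. Unset Printing Implicit Defensive.
Import Order.TTheory GRing.Theory Num.Theory.
Local Open Scope classical_set_scope.
Local Open Scope ring_scope.

Section Defs.
Variables (R : realType) (H : lmodType R).

Definition ipnorm (ip : H -> H -> R) (x : H) : R := Num.sqrt (ip x x).

Definition is_inner_product (ip : H -> H -> R) : Prop :=
  (forall x y, ip x y = ip y x) /\
  (forall (a : R) x y z, ip (a *: x + y) z = a * ip x z + ip y z) /\
  (forall x, x != 0 -> 0 < ip x x).

Definition cauchy_in (ip : H -> H -> R) (u : nat -> H) : Prop :=
  forall e : R, 0 < e -> exists N : nat, forall m n : nat,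
    (N <= m)%N -> (N <= n)%N -> ipnorm ip (u m - u n) < e.

Definition converges_in (ip : H -> H -> R) (u : nat -> H) (l : H) : Prop :=
  forall e : R, 0 < e -> exists N : nat, forall n : nat,
    (N <= n)%N -> ipnorm ip (u n - l) < e.

Definition real_Hilbert (ipH : H -> H -> R) : Prop :=
  is_inner_product ipH /\
  (forall u : nat -> H, cauchy_in ipH u -> exists l, converges_in ipH u l).

(* ---------- (A1): V ⊆ H a linear subspace, (y,z)_V := <Ay,z> a complete
   scalar product on V (aV y z stands for <Ay,z>_{V',V}) ---------- *)
Definition A1 (V : set H) (aV : H -> H -> R) : Prop :=
  [/\ V 0 /\ (forall (a : R) x y, V x -> V y -> V (a *: x + y)),
      (forall x y, V x -> V y -> aV x y = aV y x),
      (forall (a : R) x y z, V x -> V y -> V z ->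
          aV (a *: x + y) z = a * aV x z + aV y z),
      (forall x, V x -> x != 0 -> 0 < aV x x) &
      (forall u : nat -> H, (forall n, V (u n)) -> cauchy_in aV u ->
          exists2 l, V l & converges_in aV u l)].

(* ---------- (A2): V ⊆ H dense, continuous, compact ---------- *)
Definition A2 (ipH : H -> H -> R) (V : set H) (aV : H -> H -> R) : Prop :=
  [/\ (forall h : H, forall e : R, 0 < e -> exists2 v, V v & ipnorm ipH (h - v) < e),
      (exists C : R, forall v, V v -> ipH v v <= C * aV v v) &
      (forall u : nat -> H, (forall n, V (u n)) ->
         (exists B : R, forall n, aV (u n) (u n) <= B) ->
         exists phi : nat -> nat, {homo phi : m n / (m < n)%N} /\
           exists l : H, converges_in ipH (u \o phi) l)].

(* ---------- D(A) = {h in H | Ah in H}, ||z||_{D(A)} = |Az|_H ---------- *)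
Definition inDA (ipH : H -> H -> R) (V : set H) (aV : H -> H -> R) (z : H) : Prop :=
  V z /\ exists f : H, forall y, V y -> aV z y = ipH f y.

(* Az (as an element of H), for z in D(A); unique by density of V in H *)
Definition Aop (ipH : H -> H -> R) (V : set H) (aV : H -> H -> R) (z : H) : H :=
  xget 0 [set f : H | forall y, V y -> aV z y = ipH f y].

Definition normDA2 ipH V aV (z : H) : R :=
  ipH (Aop ipH V aV z) (Aop ipH V aV z).

Definition in_DA_dual ipH V aV (f : H -> R) : Prop :=
  (forall (a : R) x y, inDA ipH V aV x -> inDA ipH V aV y ->
      f (a *: x + y) = a * f x + f y) /\
  exists C : R, forall z, inDA ipH V aV z -> `|f z| <= C * Num.sqrt (normDA2 ipH V aV z).

Definition DM ipH V aV (n : nat) (dM : 'I_n -> H -> R) : set H :=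
  [set z | inDA ipH V aV z /\ forall j, dM j z = 0].

Definition xiM ipH V aV (n : nat) (dM : 'I_n -> H -> R) : \bar R :=
  ereal_inf [set ((normDA2 ipH V aV z / aV z z)%:E)%E
            | z in DM ipH V aV dM `\` [set 0]].

Definition Psid (n : nat) (PsiM : 'I_n -> H) (v : 'I_n -> R) : H :=
  \sum_(j < n) v j *: PsiM j.

Definition dnorm2 (n : nat) (dM : 'I_n -> H -> R) (z : H) : R :=
  \sum_(j < n) (dM j z) ^+ 2.

Definition A4 ipH V aV (sigma : nat -> nat)
    (d : forall M : nat, 'I_(sigma M) -> H -> R)
    (Psi : forall M : nat, 'I_(sigma M) -> H) : Prop :=
  [/\ (forall M, (0 < M)%N -> (0 < sigma M)%N),
      (forall M N, (0 < M)%N -> (M < N)%N -> (sigma M < sigma N)%N),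
      (forall M, (0 < M)%N ->
        [/\ (forall j, in_DA_dual ipH V aV (d M j)),
            (forall c : 'I_(sigma M) -> R,
               (forall z, inDA ipH V aV z -> \sum_(j < sigma M) c j * d M j z = 0) ->
               forall j, c j = 0),
            (forall j, inDA ipH V aV (Psi M j)),
            (forall c : 'I_(sigma M) -> R,
               \sum_(j < sigma M) c j *: Psi M j = 0 -> forall j, c j = 0) &
            (forall i j, d M j (Psi M i) = (i == j)%:R)]) &
      ((fun M => xiM ipH V aV (d M)) @ \oo --> +oo%E)].

Definition varpi_ok ipH V aV (n : nat) (dM : 'I_n -> H -> R) (PsiM : 'I_n -> H)
    (w : R) : Prop :=
  0 < w /\ forall v : 'I_n -> R,
    normDA2 ipH V aV (Psid PsiM v) <= w * aV (Psid PsiM v) (Psid PsiM v) /\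
    aV (Psid PsiM v) (Psid PsiM v) <= w * \sum_(j < n) (v j) ^+ 2.

End Defs.

(* Main.v *)
Set Warnings "-all".
Require Import Defs.
From HB Require Import structures.
From mathcomp Require Import all_boot all_order all_algebra.
From mathcomp Require Import all_classical all_reals all_analysis.
From mathcomp Require Import ring lra.
Import Order.TTheory GRing.Theory Num.Theory.
Local Open Scope classical_set_scope.
Local Open Scope ring_scope.

Section Form.
Variables (R : realType) (H : lmodType R) (P : set H) (b : H -> H -> R).
Hypothesis HP0 : P 0.
Hypothesis HPl : forall (a : R) x y, P x -> P y -> P (a *: x + y).
Hypothesis Hsym : forall x y, P x -> P y -> b x y = b y x.
Hypothesis Hlin : forall (a : R) x y z, P x -> P y -> P z ->
  b (a *: x + y) z = a * b x z + b y z.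
Hypothesis Hpos : forall x, P x -> x != 0 -> 0 < b x x.

Lemma PD x y : P x -> P y -> P (x + y).
Proof. by move=> *; rewrite -[x]scale1r; apply: HPl. Qed.
Lemma PZ (a : R) x : P x -> P (a *: x).
Proof. by move=> *; rewrite -[a *: x]addr0; apply: HPl. Qed.
Lemma PN x : P x -> P (- x).
Proof. by move=> *; rewrite -scaleN1r; apply: PZ. Qed.
Lemma PB x y : P x -> P y -> P (x - y).
Proof. by move=> *; apply: PD => //; apply: PN. Qed.

Lemma b0l z : P z -> b 0 z = 0.
Proof.
move=> Pz; have := @Hlin 1 0 0 z HP0 HP0 Pz; rewrite scaler0 addr0 mul1r.
lra.
Qed.
Lemma bDl x y z : P x -> P y -> P z -> b (x + y) z = b x z + b y z.
Proof. by move=> Px Py Pz; have := @Hlin 1 x y z Px Py Pz; rewrite scale1r mul1r. Qed.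
Lemma bZl a x z : P x -> P z -> b (a *: x) z = a * b x z.
Proof. by move=> Px Pz; have := @Hlin a x 0 z Px HP0 Pz; rewrite addr0 b0l // addr0. Qed.
Lemma bNl x z : P x -> P z -> b (- x) z = - b x z.
Proof. by move=> Px Pz; rewrite -scaleN1r bZl // mulN1r. Qed.
Lemma bDr x y z : P x -> P y -> P z -> b z (x + y) = b z x + b z y.
Proof. by move=> Px Py Pz; rewrite Hsym ?bDl ?(Hsym x z) ?(Hsym y z) //; apply: PD. Qed.
Lemma bZr a x z : P x -> P z -> b z (a *: x) = a * b z x.
Proof. by move=> Px Pz; rewrite Hsym ?bZl ?(Hsym x z) //; apply: PZ. Qed.
Lemma bNr x z : P x -> P z -> b z (- x) = - b z x.
Proof. by move=> Px Pz; rewrite Hsym ?bNl ?(Hsym x z) //; apply: PN. Qed.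
Lemma b_ge0 x : P x -> 0 <= b x x.
Proof.
move=> Px; have [->|/Hpos] := eqVneq x 0; first by rewrite b0l.
by move=> /(_ Px) /ltW.
Qed.
Lemma bZZ a x : P x -> b (a *: x) (a *: x) = a ^+ 2 * b x x.
Proof. by move=> Px; rewrite bZl ?bZr ?mulrA ?expr2 //; apply: PZ. Qed.
Lemma b_par x y : P x -> P y -> b (x + y) (x + y) <= 2 * b x x + 2 * b y y.
Proof.
move=> Px Py; have := b_ge0 (x - y) (PB _ _ Px Py).
have Pxy := PD _ _ Px Py; have Pny := PN _ Py.
have Pxmy := PB _ _ Px Py.
rewrite !bDl // !bDr // !bNl // !bNr // (Hsym y x) //.
lra.
Qed.
Lemma P_sum n (v : 'I_n -> R) (x : 'I_n -> H) :
  (forall j, P (x j)) -> P (\sum_j v j *: x j).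
Proof.
move=> Px; elim/big_rec: _ => //= i s _ Ps; by apply: HPl.
Qed.
Lemma b_sum n (v : 'I_n -> R) (x : 'I_n -> H) : (forall j, P (x j)) ->
  b (\sum_j v j *: x j) (\sum_j v j *: x j) <=
  2 ^+ n * ((\sum_j v j ^+ 2) * (\sum_j b (x j) (x j))).
Proof.
elim: n v x => [|n IH] v x Px.
  by rewrite !big_ord0 b0l // mul0r mulr0.
rewrite !big_ord_recr /=.
set S := \sum_(i < n) _.
set A := \sum_(i < n) _.
set B := \sum_(i < n) _.
have PS : P S by apply: P_sum.
have PX : P (v ord_max *: x ord_max) by apply: PZ.
have h1 := b_par _ _ PS PX.
rewrite bZZ // in h1.
have h2 : b S S <= 2 ^+ n * (A * B) by apply: IH.
have hA : 0 <= A by apply: sumr_ge0 => i _; apply: sqr_ge0.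
have hB : 0 <= B by apply: sumr_ge0 => i _; apply: b_ge0.
have hq : 0 <= b (x ord_max) (x ord_max) by apply: b_ge0.
have hc : 1 <= 2 ^+ n :> R by apply: exprn_ege1; lra.
have hv : 0 <= v ord_max ^+ 2 by apply: sqr_ge0.
rewrite exprS.
set c := 2 ^+ n in h2 hc *.
set q := b (x ord_max) (x ord_max) in h1 hq *.
set w := v ord_max ^+ 2 in h1 hv *.
have hAq : 0 <= A * q by apply: mulr_ge0.
have hwB : 0 <= w * B by apply: mulr_ge0.
have hwq : 0 <= w * q by apply: mulr_ge0.
have : 2 * w * q <= 2 * c * (w * q) by nra.
have : 0 <= 2 * c * (A * q + w * B) by nra.
nra.
Qed.
End Form.

Section AopS.
Variables (R : realType) (H : lmodType R) (ipH : H -> H -> R) (V : set H) (aV : H -> H -> R).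
Hypothesis hip : is_inner_product ipH.
Hypothesis hA1 : A1 V aV.
Hypothesis hdense : forall h : H, forall e : R, 0 < e -> exists2 v, V v & ipnorm ipH (h - v) < e.

Let hT0 : [set: H] 0. Proof. by []. Qed.
Let hTl : forall (a : R) x y, [set: H] x -> [set: H] y -> [set: H] (a *: x + y).
Proof. by []. Qed.
Let hTsym : forall x y, [set: H] x -> [set: H] y -> ipH x y = ipH y x.
Proof. by case: hip => h _ x y _ _; apply: h. Qed.
Let hTlin : forall (a : R) x y z, [set: H] x -> [set: H] y -> [set: H] z ->
  ipH (a *: x + y) z = a * ipH x z + ipH y z.
Proof. by case: hip => _ [h _] a x y z _ _ _; apply: h. Qed.
Let hTpos : forall x, [set: H] x -> x != 0 -> 0 < ipH x x.
Proof. by case: hip => _ [_ h] x _; apply: h. Qed.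

Let hV0 : V 0. Proof. by case: hA1 => -[]. Qed.
Let hVl : forall (a : R) x y, V x -> V y -> V (a *: x + y).
Proof. by case: hA1 => -[]. Qed.
Let hVsym : forall x y, V x -> V y -> aV x y = aV y x.
Proof. by case: hA1. Qed.
Let hVlin : forall (a : R) x y z, V x -> V y -> V z ->
  aV (a *: x + y) z = a * aV x z + aV y z.
Proof. by case: hA1. Qed.
Let hVpos : forall x, V x -> x != 0 -> 0 < aV x x.
Proof. by case: hA1. Qed.

Ltac tT := first [done | exact: hT0 | exact: hTl | exact: hTsym | exact: hTlin | exact: hTpos].
Ltac tV := first [done | exact: hV0 | exact: hVl | exact: hVsym | exact: hVlin | exact: hVpos].

Lemma ipDl x y z : ipH (x + y) z = ipH x z + ipH y z.
Proof. by apply: bDl; tT. Qed.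
Lemma ipZl a x z : ipH (a *: x) z = a * ipH x z.
Proof. by apply: bZl; tT. Qed.
Lemma ipNl x z : ipH (- x) z = - ipH x z.
Proof. by apply: bNl; tT. Qed.
Lemma ipDr x y z : ipH z (x + y) = ipH z x + ipH z y.
Proof. by apply: bDr; tT. Qed.
Lemma ipNr x z : ipH z (- x) = - ipH z x.
Proof. by apply: bNr; tT. Qed.
Lemma ip0l z : ipH 0 z = 0.
Proof. by apply: b0l; tT. Qed.
Lemma ip_ge0 x : 0 <= ipH x x.
Proof. by apply: b_ge0; tT. Qed.

Lemma ip_unique g : (forall y, V y -> ipH g y = 0) -> g = 0.
Proof.
move=> hg; apply/eqP; apply/negPn/negP => gn0.
have c0 : 0 < ipH g g by apply: hTpos.
have e0 : 0 < Num.sqrt (ipH g g / 2) by rewrite sqrtr_gt0 divr_gt0.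
have [v Vv] := hdense g _ e0.
rewrite /ipnorm ltr_sqrt ?divr_gt0 //.
rewrite ipDl !ipDr !ipNl !ipNr opprK (hg v Vv) (hTsym v g) // (hg v Vv) oppr0 !add0r.
have := ip_ge0 v; move: c0.
lra.
Qed.

Lemma AopP z : inDA ipH V aV z -> forall y, V y -> aV z y = ipH (Aop ipH V aV z) y.
Proof.
case=> _ [f hf]; rewrite /Aop.
exact: (xgetI 0 (P := [set f : H | forall y, V y -> aV z y = ipH f y]) hf).
Qed.

Lemma Aop_uniq z f : inDA ipH V aV z -> (forall y, V y -> aV z y = ipH f y) ->
  Aop ipH V aV z = f.
Proof.
move=> hz hf; apply/eqP; rewrite -subr_eq0; apply/eqP; apply: ip_unique => y Vy.
by rewrite ipDl ipNl -AopP // -hf // subrr.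
Qed.

Lemma inDA_lin a x y : inDA ipH V aV x -> inDA ipH V aV y -> inDA ipH V aV (a *: x + y).
Proof.
move=> hx hy; split; first by apply: hVl; [case: hx | case: hy].
exists (a *: Aop ipH V aV x + Aop ipH V aV y) => w Vw.
rewrite hVlin //; [|by case: hx|by case: hy].
by rewrite ipDl ipZl -!AopP.
Qed.

Lemma Aop_lin a x y : inDA ipH V aV x -> inDA ipH V aV y ->
  Aop ipH V aV (a *: x + y) = a *: Aop ipH V aV x + Aop ipH V aV y.
Proof.
move=> hx hy; apply: Aop_uniq; first exact: inDA_lin.
move=> w Vw; rewrite hVlin //; [|by case: hx|by case: hy].
by rewrite ipDl ipZl -!AopP.
Qed.

Lemma inDA0 : inDA ipH V aV 0.
Proof.
split => //; exists 0 => y Vy; rewrite ip0l; apply: b0l; tV.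
Qed.

Lemma Aop0 : Aop ipH V aV 0 = 0.
Proof.
apply: Aop_uniq; first exact: inDA0.
by move=> y Vy; rewrite ip0l; apply: b0l; tV.
Qed.

Lemma normDA2_ge0 z : 0 <= normDA2 ipH V aV z.
Proof. exact: ip_ge0. Qed.

Lemma normDA2_sub x y : inDA ipH V aV x -> inDA ipH V aV y ->
  normDA2 ipH V aV (x - y) <= 2 * normDA2 ipH V aV x + 2 * normDA2 ipH V aV y.
Proof.
move=> hx hy; rewrite /normDA2.
have -> : x - y = (-1) *: y + x by rewrite addrC scaleN1r.
rewrite Aop_lin // scaleN1r addrC.
have h : ipH (Aop ipH V aV x + - Aop ipH V aV y) (Aop ipH V aV x + - Aop ipH V aV y)
  <= 2 * ipH (Aop ipH V aV x) (Aop ipH V aV x) + 2 * ipH (- Aop ipH V aV y) (- Aop ipH V aV y).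
  by apply: b_par; tT.
by move: h; rewrite ipNl ipNr opprK.
Qed.


Lemma lin_sum n (f : H -> R) (c : 'I_n -> R) (x : 'I_n -> H) :
  (forall a u w, inDA ipH V aV u -> inDA ipH V aV w -> f (a *: u + w) = a * f u + f w) ->
  (forall j, inDA ipH V aV (x j)) ->
  inDA ipH V aV (\sum_j c j *: x j) /\ f (\sum_j c j *: x j) = \sum_j c j * f (x j).
Proof.
move=> hf hx.
apply: (big_rec2 (fun s t => inDA ipH V aV s /\ f s = t)).
  split; first exact: inDA0.
  have := hf 1 0 0 inDA0 inDA0; rewrite scaler0 addr0 mul1r => h; lra.
move=> i s t _ [hs <-]; split; first exact: inDA_lin.
by rewrite hf.
Qed.

Lemma Aop_sum n (c : 'I_n -> R) (x : 'I_n -> H) :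
  (forall j, inDA ipH V aV (x j)) ->
  Aop ipH V aV (\sum_j c j *: x j) = \sum_j c j *: Aop ipH V aV (x j).
Proof.
move=> hx.
suff [] : inDA ipH V aV (\sum_j c j *: x j) /\
  Aop ipH V aV (\sum_j c j *: x j) = \sum_j c j *: Aop ipH V aV (x j) by [].
apply: (big_rec2 (fun s t => inDA ipH V aV s /\ Aop ipH V aV s = t)).
  by split; [exact: inDA0 | exact: Aop0].
move=> i s t _ [hs <-]; split; first exact: inDA_lin.
by rewrite Aop_lin.
Qed.

Lemma normDA2_Psid n (Ps : 'I_n -> H) (v : 'I_n -> R) :
  (forall j, inDA ipH V aV (Ps j)) ->
  normDA2 ipH V aV (Psid Ps v) <=
  2 ^+ n * ((\sum_j v j ^+ 2) * (\sum_j normDA2 ipH V aV (Ps j))).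
Proof.
move=> hP; rewrite /normDA2 /Psid Aop_sum //.
by apply: b_sum; tT.
Qed.

Lemma aV_Psid n (Ps : 'I_n -> H) (v : 'I_n -> R) :
  (forall j, inDA ipH V aV (Ps j)) ->
  aV (Psid Ps v) (Psid Ps v) <=
  2 ^+ n * ((\sum_j v j ^+ 2) * (\sum_j aV (Ps j) (Ps j))).
Proof.
move=> hP; rewrite /Psid.
apply: b_sum; try tV; by move=> j; case: (hP j).
Qed.

Lemma core n (dM : 'I_n -> H -> R) (PsiM : 'I_n -> H) (zeta C1 C2 : R) :
  (forall j, in_DA_dual ipH V aV (dM j)) ->
  (forall j, inDA ipH V aV (PsiM j)) ->
  (forall i j, dM j (PsiM i) = (i == j)%:R) ->
  0 < zeta ->
  (forall th, DM ipH V aV dM th -> 4 * zeta * aV th th <= normDA2 ipH V aV th) ->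
  (forall v, normDA2 ipH V aV (Psid PsiM v) <= C1 * \sum_j v j ^+ 2) ->
  (forall v, aV (Psid PsiM v) (Psid PsiM v) <= C2 * \sum_j v j ^+ 2) ->
  forall z, inDA ipH V aV z ->
    zeta * aV z z <= normDA2 ipH V aV z + (C1 + 2 * zeta * C2) * dnorm2 dM z.
Proof.
move=> hd hP hdP z0 hxi hC1 hC2 z hz.
pose v := fun j => dM j z.
pose p := Psid PsiM v.
have hdp : forall j, inDA ipH V aV p /\ dM j p = v j.
  move=> j; have [h1 h2] := @lin_sum n (dM j) v PsiM (proj1 (hd j)) hP.
  split => //; rewrite /p /Psid h2.
  rewrite (bigD1 j) //= hdP eqxx mulr1 big1 ?addr0 // => i /negbTE ni.
  by rewrite hdP ni mulr0.
have hp : inDA ipH V aV p.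
  have [] := @lin_sum n (fun _ => 0) v PsiM _ hP => //.
  by move=> *; rewrite mulr0 addr0.
have hth : DM ipH V aV dM (z - p).
  have e : z - p = (-1) *: p + z by rewrite scaleN1r addrC.
  split; rewrite e; first exact: inDA_lin.
  move=> j; rewrite (proj1 (hd j)) //; have [_ ->] := hdp j.
  by rewrite /v mulN1r addNr.
have Vz : V z by case: hz.
have Vp : V p by case: hp.
have Vth : V (z - p) by case: hth => -[].
have h1 : aV z z <= 2 * aV (z - p) (z - p) + 2 * aV p p.
  have h : aV (z - p + p) (z - p + p) <= 2 * aV (z - p) (z - p) + 2 * aV p p.
    by apply: b_par; tV.
  by move: h; rewrite subrK.
have h2 := hxi _ hth.
have h3 : normDA2 ipH V aV (z - p) <= 2 * normDA2 ipH V aV z + 2 * normDA2 ipH V aV p.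
  exact: normDA2_sub.
have h4 := hC1 v.
have h5 := hC2 v.
have -> : dnorm2 dM z = \sum_j v j ^+ 2 by [].
set D := \sum_j v j ^+ 2 in h4 h5 *.
have h6 : zeta * aV z z <= zeta * (2 * aV (z - p) (z - p) + 2 * aV p p).
  by rewrite ler_pM2l.
have h7 : zeta * aV p p <= zeta * (C2 * D) by rewrite ler_pM2l.
nra.
Qed.


Lemma xi_bound n (dM : 'I_n -> H -> R) (c : R) :
  (c%:E <= xiM ipH V aV dM)%E ->
  forall th, DM ipH V aV dM th -> c * aV th th <= normDA2 ipH V aV th.
Proof.
move=> hc th hth.
have Vth : V th by case: hth => -[].
have [->|th0] := eqVneq th 0.
  have -> : aV 0 0 = 0 by apply: b0l; tV.
  by rewrite mulr0; apply: normDA2_ge0.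
have pos := hVpos th Vth th0.
rewrite -ler_pdivlMr //; rewrite -lee_fin.
apply: le_trans hc _; apply: ereal_inf_lbound.
by exists th => //; split => //; apply/eqP.
Qed.

Lemma aV_ge0 x : V x -> 0 <= aV x x.
Proof. by move=> Vx; apply: b_ge0; tV. Qed.

End AopS.

Theorem lemma3p4 (R : realType) (H : lmodType R) (ipH : H -> H -> R)
    (V : set H) (aV : H -> H -> R) (sigma : nat -> nat)
    (d : forall M : nat, 'I_(sigma M) -> H -> R)
    (Psi : forall M : nat, 'I_(sigma M) -> H) :
  real_Hilbert ipH -> A1 V aV -> A2 ipH V aV -> A4 ipH V aV d Psi ->
  (forall zeta : R, 0 < zeta ->
     exists M : nat, (0 < M)%N /\ exists2 lambda : R, 0 < lambda &
       forall z : H, inDA ipH V aV z ->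
         normDA2 ipH V aV z + 2 * lambda * dnorm2 (d M) z >= zeta * aV z z)
  /\
  (exists (Mf : R -> nat) (Lf : R -> R -> R),
     [/\ (forall zeta, 0 < zeta -> (0 < Mf zeta)%N),
         (forall z1 z2, 0 < z1 -> z1 <= z2 -> (Mf z1 <= Mf z2)%N),
         (forall z1 z2 w1 w2, 0 < z1 -> z1 <= z2 -> 0 < w1 -> w1 <= w2 ->
            Lf z1 w1 <= Lf z2 w2) &
         forall zeta w, 0 < zeta ->
           varpi_ok ipH V aV (d (Mf zeta)) (Psi (Mf zeta)) w ->
           0 < Lf zeta w /\
           forall z : H, inDA ipH V aV z ->
             normDA2 ipH V aV z + 2 * Lf zeta w * dnorm2 (d (Mf zeta)) z
               >= zeta * aV z z]).
Proof.
move=> [hip _] hA1 [hdense _ _] [hsig0 _ hM hxi].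
pose Pz (zeta : R) (n : nat) : Prop :=
  (0 < n)%N /\ forall N, (n <= N)%N -> ((4 * zeta)%:E <= xiM ipH V aV (d N))%E.
have exP : forall zeta : R, exists n, `[< Pz zeta n >].
  move=> zeta; have [N _ HN] := cvgey_ge hxi (4 * zeta).
  exists N.+1; apply/asboolP; split => // N' hN'; apply: HN.
  by rewrite /= (leq_trans (leqnSn N) hN').
pose Mf zeta := ex_minn (exP zeta).
have hMf : forall zeta, Pz zeta (Mf zeta).
  by move=> zeta; rewrite /Mf; case: ex_minnP => m /asboolP.
have hMfmin : forall zeta n, Pz zeta n -> (Mf zeta <= n)%N.
  move=> zeta n hn; rewrite /Mf; case: ex_minnP => m _; apply.
  exact/asboolP.
clearbody Mf.
have bound : forall zeta, 0 < zeta -> forall C1 C2 : R,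
  (forall v, normDA2 ipH V aV (Psid (Psi (Mf zeta)) v) <= C1 * \sum_j v j ^+ 2) ->
  (forall v, aV (Psid (Psi (Mf zeta)) v) (Psid (Psi (Mf zeta)) v) <= C2 * \sum_j v j ^+ 2) ->
  forall z, inDA ipH V aV z ->
    zeta * aV z z <= normDA2 ipH V aV z + (C1 + 2 * zeta * C2) * dnorm2 (d (Mf zeta)) z.
  move=> zeta z0 C1 C2 h1 h2 z hz.
  have [hpos hge] := hMf zeta.
  have [hd _ hP _ hdP] := hM _ hpos.
  apply: (@core _ _ _ _ _ hip hA1 hdense _ _ _ _ _ _ hd hP hdP z0 _ h1 h2 _ hz).
  move=> th hth; have hc := hge _ (leqnn _).
  exact: (@xi_bound _ _ _ _ _ hip hA1 _ _ (4*zeta) hc th hth).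
split.
  move=> zeta z0; exists (Mf zeta); split; first by case: (hMf zeta).
  have [hpos _] := hMf zeta.
  have [_ _ hP _ _] := hM _ hpos.
  set n := sigma (Mf zeta).
  set SN := \sum_(j < n) normDA2 ipH V aV (Psi (Mf zeta) j).
  set SA := \sum_(j < n) aV (Psi (Mf zeta) j) (Psi (Mf zeta) j).
  have hSN : 0 <= SN by apply: sumr_ge0 => j _; apply: normDA2_ge0.
  have hSA : 0 <= SA.
    apply: sumr_ge0 => j _; exact: (@aV_ge0 _ _ _ _ hA1 _ (proj1 (hP j))).
  have hc : 0 <= 2 ^+ n :> R by apply: exprn_ge0.
  exists ((2 ^+ n * SN + 1 + 2 * zeta * (2 ^+ n * SA + 1)) / 2).
    have h1 : 0 <= 2 ^+ n * SN by apply: mulr_ge0.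
    have h2 : 0 <= 2 ^+ n * SA by apply: mulr_ge0.
    have h3 : 0 <= 2 * zeta * (2 ^+ n * SA + 1).
      have hz2 : 0 <= 2 * zeta by lra.
      have hS1 : 0 <= 2 ^+ n * SA + 1 by lra.
      exact: (mulr_ge0 hz2 hS1).
    lra.
  have hb1 : forall v : 'I_n -> R, normDA2 ipH V aV (Psid (Psi (Mf zeta)) v) <=
      (2 ^+ n * SN + 1) * \sum_j v j ^+ 2.
    move=> v; apply: le_trans (@normDA2_Psid _ _ _ _ _ hip hA1 hdense _ _ v hP) _.
    have hv : 0 <= \sum_j v j ^+ 2 by apply: sumr_ge0 => j _; apply: sqr_ge0.
    by rewrite mulrDl mul1r (mulrC (\sum_j _)) mulrA lerDl.
  have hb2 : forall v : 'I_n -> R,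
      aV (Psid (Psi (Mf zeta)) v) (Psid (Psi (Mf zeta)) v) <=
      (2 ^+ n * SA + 1) * \sum_j v j ^+ 2.
    move=> v; apply: le_trans (@aV_Psid _ _ _ _ _ hA1 _ _ v hP) _.
    have hv : 0 <= \sum_j v j ^+ 2 by apply: sumr_ge0 => j _; apply: sqr_ge0.
    by rewrite mulrDl mul1r (mulrC (\sum_j _)) mulrA lerDl.
  move=> z hz.
  have h := bound zeta z0 (2 ^+ n * SN + 1) (2 ^+ n * SA + 1) hb1 hb2 z hz.
  move: h; set X := _ + 2 * zeta * _.
  have -> : 2 * (X / 2) = X by field.
  by [].
exists Mf, (fun zeta w => (w * w + 2 * zeta * w) / 2); split.
- by move=> zeta _; case: (hMf zeta).
- move=> z1 z2 z10 hz; apply: hMfmin.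
  have [hp hge] := hMf z2; split => // N hN.
  apply: le_trans (hge N hN); rewrite lee_fin; lra.
- move=> z1 z2 w1 w2 z10 hz w10 hw.
  have h1 : w1 * w1 <= w2 * w2 by apply: ler_pM => //; exact: ltW.
  have h2 : z1 * w1 <= z2 * w2 by apply: ler_pM => //; exact: ltW.
  lra.
- move=> zeta w z0 [w0 hw]; split.
    apply: divr_gt0 => //; apply: addr_gt0; first exact: mulr_gt0.
    by apply: mulr_gt0 => //; apply: mulr_gt0.
  move=> z hz.
  have hb1 : forall v, normDA2 ipH V aV (Psid (Psi (Mf zeta)) v) <=
      w * w * \sum_j v j ^+ 2.
    move=> v; have [h1 h2] := hw v.
    have : w * aV (Psid (Psi (Mf zeta)) v) (Psid (Psi (Mf zeta)) v)
         <= w * (w * \sum_j v j ^+ 2) by rewrite ler_pM2l.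
    by rewrite mulrA; apply: le_trans.
  have hb2 : forall v, aV (Psid (Psi (Mf zeta)) v) (Psid (Psi (Mf zeta)) v) <=
      w * \sum_j v j ^+ 2 by move=> v; have [_ h2] := hw v.
  have h := bound zeta z0 (w * w) w hb1 hb2 z hz.
  move: h; set X := _ + 2 * zeta * _.
  have -> : 2 * (X / 2) = X by field.
  by [].
Qed.
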